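(* Let $X=(X_1,\dots,X_d)$ be a random vector of asset returns with finite, strictly positive variances and correlation matrix $\boldsymbol{\rho}=(\rho_{ij})$. Let $G^{\star}=\{G_1,\dots,G_K\}$ be the partition of $[d]$ into the equivalence classes of the relation $i\sim j \iff \max_{l\neq i,j}|\rho_{il}-\rho_{jl}|=0$. For a selection $J=(J(1),\dots,J(K))$ with $J(k)\in G_k$ for each $k$, let $\boldsymbol{\Sigma}_{J}$ be the $K\times K$ covariance matrix of $(X_{J(1)},\dots,X_{J(K)})$ and define the minimum (no-short-selling) portfolio variance $$\mathrm{Var}_{\min}(P_J):=\min\{\mathbf{w}^{\top}\boldsymbol{\Sigma}_J\mathbf{w}:\ \mathbf{w}\in\mathbb{R}^K,\ \mathbf{w}^{\top}\mathbf{1}=1,\ \mathbf{w}\ge 0\}.$$ Let $J^{*}$ be any selection with $J^{*}(k)\in\operatorname{argmin}_{j\in G_k}\mathrm{Var}(X_j)$ for every $k\in[K]$. Then $\mathrm{Var}_{\min}(P_{J^{*}})\le \mathrm{Var}_{\min}(P_J)$ for every selection $J$, i.e. $J^*$ minimizes $\mathrm{Var}_{\min}(P_J)$ over all selections.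
   Context: $[d]=\{1,\dots,d\}$; $\mathbf{1}$ is the all-ones vector and $\mathbf{w}\ge0$ is componentwise. *)

(* Defs.v *)
From HB Require Import structures.
From mathcomp Require Import all_boot all_order all_algebra.
From mathcomp Require Import all_classical all_reals all_analysis.
Unset Printing Implicit Defensive.
Import Order.TTheory GRing.Theory Num.Theory.
Local Open Scope ring_scope.

Section defs.
Context {dT : measure_display} {T : measurableType dT} {R : realType}.
Variable (P : probability T R).
Context {d : nat}.
Variable (X : 'I_d -> T -> R).

(* covariance (real-valued; finite under the L^2 hypotheses) *)
Definition cov (i j : 'I_d) : R := fine (covariance P (X i) (X j)).
Definition var (i : 'I_d) : R := fine ('V_P[X i]).

Definition corr (i j : 'I_d) : R := cov i j / Num.sqrt (var i * var j).

(* i ~ j  iff  max_{l <> i,j} |rho_il - rho_jl| = 0  (empty max = 0) *)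
Definition corr_sim (i j : 'I_d) : bool :=
  \big[Num.max/0]_(l | (l != i) && (l != j)) `|corr i l - corr j l| == 0.

Definition Gstar : {set {set 'I_d}} :=
  equivalence_partition corr_sim [set: 'I_d].

Definition Kstar : nat := #|Gstar|.
Definition Gk (k : 'I_Kstar) : {set 'I_d} := enum_val k.

Definition is_selection (J : 'I_Kstar -> 'I_d) : Prop := forall k, J k \in Gk k.

Definition SigmaJ (J : 'I_Kstar -> 'I_d) : 'M[R]_Kstar :=
  \matrix_(k, l) cov (J k) (J l).
End defs.

Definition simplex {R : realType} (K : nat) : set 'cV[R]_K :=
  [set w | \sum_(k < K) w k 0 = 1 /\ forall k, 0 <= w k 0].

(* min { w^T S w : w in simplex } (the minimum exists by compactness,
   so it coincides with the infimum) *)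
Definition varmin {R : realType} {K : nat} (S : 'M[R]_K) : R :=
  inf [set (w^T *m S *m w) 0 0 | w in @simplex R K].

(* Main.v *)
Require Import Defs.
From HB Require Import structures.
From mathcomp Require Import all_boot all_order all_algebra.
From mathcomp Require Import all_classical all_reals all_analysis.
From mathcomp Require Import ring lra.
Import Order.TTheory GRing.Theory Num.Theory.
Local Open Scope ring_scope.

Section aux.
Context {dT : measure_display} {T : measurableType dT} {R : realType}.
Variable (P : probability T R).
Context {d : nat}.
Variable (X : 'I_d -> T -> R).

Lemma corrC i j : corr P X i j = corr P X j i.
Proof. by rewrite /corr /cov covarianceC (mulrC (var P X i)). Qed.

Lemma corr_simP i j : corr_sim P X i j <->
  (forall l, l != i -> l != j -> corr P X i l = corr P X j l).
Proof.
rewrite /corr_sim; split.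
- move=> /eqP H l li lj; apply/eqP; rewrite -subr_eq0 -normr_eq0 eq_le normr_ge0 andbT.
  rewrite -[X in _ <= X]H; by rewrite (bigD1 l) /= ?li ?lj // le_max lexx.

- move=> H; apply/eqP; apply: (big_ind (fun x => x = 0)) => // [x y -> ->|l /andP[li lj]]; [exact: maxxx | by rewrite H // subrr normr0].
Qed.

Lemma corr_sim_refl i : corr_sim P X i i.
Proof. by apply/corr_simP. Qed.

Lemma corr_sim_sym i j : corr_sim P X i j -> corr_sim P X j i.
Proof. move/corr_simP=> H; apply/corr_simP => l lj li; by rewrite H. Qed.

Lemma corr_sim_trans i j k : corr_sim P X i j -> corr_sim P X j k -> corr_sim P X i k.
Proof.
move=> /corr_simP Hij /corr_simP Hjk; apply/corr_simP => l li lk.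
have [lj|lj] := eqVneq l j; last by rewrite Hij // Hjk.
subst l.
have [<-|ik] := eqVneq i k; first by [].
rewrite corrC (Hjk i) 1?eq_sym //. rewrite corrC (Hij k) 1?eq_sym // corrC. all: by rewrite // eq_sym.
Qed.
Arguments corr_sim_trans {i j k}.
Arguments corr_sim_sym {i j}.

Lemma class_of (k : 'I_(Kstar P X)) : exists x, forall y, (y \in Gk P X k) = corr_sim P X x y.
Proof.
have := enum_valP k; rewrite /Gk /Gstar /equivalence_partition => /imsetP[x _ ->].
by exists x => y; rewrite !inE.
Qed.

Lemma same_class k i j : i \in Gk P X k -> j \in Gk P X k -> corr_sim P X i j.
Proof.
have [x Hx] := class_of k; rewrite !Hx => xi xj.
exact: corr_sim_trans (corr_sim_sym xi) xj.
Qed.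

Lemma Gk_uniq k l z : z \in Gk P X k -> z \in Gk P X l -> k = l.
Proof.
have [x Hx] := class_of k; have [y Hy] := class_of l.
rewrite Hx Hy => xz yz; apply: enum_val_inj; apply/setP => u.
have := Hx u; have := Hy u; rewrite /Gk => -> ->.
have xy := corr_sim_trans xz (corr_sim_sym yz).
apply/idP/idP => H; [exact: corr_sim_trans (corr_sim_sym xy) H | exact: corr_sim_trans xy H].
Qed.
End aux.

Section bil.
Context {dT : measure_display} {T : measurableType dT} {R : realType}.
Variable (P : probability T R).

Lemma cov_fin (f g : T -> R) : f \in Lfun P 2%:E -> g \in Lfun P 2%:E ->
  covariance P f g = (fine (covariance P f g))%:E.
Proof.
move=> Hf Hg; have Pfin := fin_num_measure P _ measurableT.
rewrite fineK // covariance_fin_num ?Lfun2_mul_Lfun1 //; exact: Lfun_subset12.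
Qed.

Lemma cov_sum_l {I : Type} (r : seq I) (F : I -> T -> R) (v : I -> R) (Z : T -> R) :
 (forall k, F k \in Lfun P 2%:E) -> Z \in Lfun P 2%:E ->
 (fun t => \sum_(k <- r) v k * F k t) \in Lfun P 2%:E /\
 covariance P (fun t => \sum_(k <- r) v k * F k t) Z =
   (\sum_(k <- r) v k * fine (covariance P (F k) Z))%:E.
Proof.
move=> HF HZ; have Pfin := fin_num_measure P _ measurableT.
elim: r => [|a r [IH1 IH2]].
  have -> : (fun t => \sum_(k <- [::]) v k * F k t) = cst 0.
    by apply/funext => t; rewrite big_nil.
  by rewrite big_nil; split; [exact: Lfun_cst | rewrite covariance_cst_l].
have -> : (fun t => \sum_(k <- a :: r) v k * F k t) =
   ((v a \o* F a) \+ (fun t => \sum_(k <- r) v k * F k t))%R.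
  by apply/funext => t /=; rewrite big_cons mulrC.
have Ha : (v a \o* F a)%R \in Lfun P 2%:E by apply: Lfun_scale => //; rewrite ler1n.
split; first by apply: (rpredD Ha IH1); rewrite lee_fin ler1n.
rewrite covarianceDl // IH2 covarianceZl ?Lfun2_mul_Lfun1 ?(Lfun_subset12 Pfin) //.
by rewrite big_cons EFinD EFinM -cov_fin.
Qed.

Lemma quad_ge0 n (F : 'I_n -> T -> R) (w : 'I_n -> R) :
  (forall k, F k \in Lfun P 2%:E) ->
  0 <= \sum_l (\sum_k w k * fine (covariance P (F k) (F l))) * w l.
Proof.
move=> HF.
pose Y := fun t => \sum_k w k * F k t.
have HY : Y \in Lfun P 2%:E.
  exact: (proj1 (cov_sum_l (index_enum 'I_n) F w (cst 0) HF (Lfun_cst _ _ _))).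
have [_ HYY] := cov_sum_l (index_enum 'I_n) F w Y HF HY.
have HFY k : fine (covariance P (F k) Y) = \sum_l w l * fine (covariance P (F l) (F k)).
  rewrite covarianceC.
  have [_ ->] := cov_sum_l (index_enum 'I_n) F w (F k) HF (HF k).
  by [].
have : 0 <= fine (covariance P Y Y).
  by apply: fine_ge0; exact: variance_ge0.
rewrite HYY /=.
under eq_bigr do rewrite HFY.
move=> H; rewrite (eq_bigr (fun i => w i * \sum_l w l * fine (covariance P (F l) (F i)))) // => i _.
exact: mulrC.
Qed.
End bil.

Lemma quadE {R : realType} K (S : 'M[R]_K) (w : 'cV[R]_K) :
  (w^T *m S *m w) 0 0 = \sum_l (\sum_k w k 0 * S k l) * w l 0.
Proof.
rewrite !mxE; apply: eq_bigr => l _; rewrite !mxE; congr (_ * _).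
by apply: eq_bigr => k _; rewrite mxE.
Qed.

Theorem theorem2 (dT : measure_display) (T : measurableType dT) (R : realType)
  (P : probability T R) (d : nat) (X : 'I_d -> {RV P >-> R})
  (hL2 : forall i, (X i : T -> R) \in Lfun P 2%:E)
  (hpos : forall i, (0 < 'V_P[X i])%E)
  (Jstar : 'I_(Kstar P X) -> 'I_d)
  (hJstar : is_selection P X Jstar)
  (hargmin : forall k, forall j, j \in Gk P X k ->
      var P X (Jstar k) <= var P X j) :
  forall J : 'I_(Kstar P X) -> 'I_d, is_selection P X J ->
    varmin (SigmaJ P X Jstar) <= varmin (SigmaJ P X J).
Proof.
move=> J hJ.
set K := Kstar P X in Jstar hJstar hargmin J hJ *.
have varpos i : 0 < var P X i.
  rewrite /var -lte_fin fineK; [exact: hpos | exact: variance_fin_num].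
set Y := (fun x : 'I_d => X x : T -> R) in hJstar hargmin hJ varpos *.
pose s i := Num.sqrt (var P Y i).
have spos i : 0 < s i by rewrite sqrtr_gt0.
have sne0 i : s i != 0 by rewrite gt_eqF.
have ss i : s i * s i = var P Y i by rewrite -expr2 sqr_sqrtr // ltW.
have covii i : cov P Y i i = var P Y i by [].
have corrE i j : corr P Y i j = cov P Y i j / (s i * s j).
  by rewrite /corr sqrtrM // ltW.
have key k l : cov P Y (Jstar k) (Jstar l) * (s (J k) * s (J l)) =
               cov P Y (J k) (J l) * (s (Jstar k) * s (Jstar l)).
  have [<-|kl] := eqVneq k l.
    by rewrite !covii -!ss mulrC.
  have sk := same_class P Y _ _ _ (hJstar k) (hJ k).
  have sl := same_class P Y _ _ _ (hJstar l) (hJ l).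
  have diff (a b : 'I_d) : a \in Gk P Y k -> b \in Gk P Y l -> b != a.
    move=> ha hb; apply/eqP => ba; rewrite ba in hb.
    by rewrite (Gk_uniq P Y _ _ _ ha hb) eqxx in kl.
  have hc : corr P Y (Jstar k) (Jstar l) = corr P Y (J k) (J l).
    rewrite ((corr_simP _ _ _ _).1 sk (Jstar l)); last 2 first.
    - exact: diff (hJstar k) (hJstar l).
    - exact: diff (hJ k) (hJstar l).
    rewrite corrC ((corr_simP _ _ _ _).1 sl (J k)); first exact: corrC.
    - rewrite eq_sym; exact: diff (hJ k) (hJstar l).
    - rewrite eq_sym; exact: diff (hJ k) (hJ l).
  move: hc; rewrite !corrE => hc.
  have b0 : s (Jstar k) * s (Jstar l) != 0 by rewrite mulf_neq0.
  rewrite -[cov P Y (Jstar k) (Jstar l)](divfK b0) hc.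
  by rewrite mulrAC divfK // mulf_neq0.
have Qge0 (M : 'I_K -> 'I_d) (w : 'cV[R]_K) : 0 <= (w^T *m SigmaJ P Y M *m w) 0 0.
  rewrite quadE.
  have := quad_ge0 P _ (fun k => Y (M k)) (fun k => w k 0) (fun k => hL2 _).
  congr (_ <= _); apply: eq_bigr => l _; congr (_ * _).
  by apply: eq_bigr => k _; rewrite mxE.
have step (w : 'cV[R]_K) : simplex K w -> exists w' : 'cV[R]_K, simplex K w' /\
    (w'^T *m SigmaJ P Y Jstar *m w') 0 0 <= (w^T *m SigmaJ P Y J *m w) 0 0.
  move=> [w1 w0].
  pose r k := s (J k) / s (Jstar k).
  have r1 k : 1 <= r k.
    rewrite /r ler_pdivlMr // mul1r /s ler_sqrt; last exact: ltW.
    exact: hargmin (hJ k).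
  pose t := \sum_k w k 0 * r k.
  have t1 : 1 <= t.
    rewrite -w1; apply: ler_sum => k _; exact: ler_peMr.
  have t0 : 0 < t by apply: lt_le_trans t1.
  pose w' : 'cV[R]_K := \col_k (w k 0 * r k / t).
  exists w'; split.
    split.
      rewrite (eq_bigr (fun k => w k 0 * r k / t)) => [|k _]; last by rewrite mxE.
      by rewrite -mulr_suml divff // gt_eqF.
    move=> k; rewrite mxE; apply: divr_ge0 (ltW t0); apply: mulr_ge0 (w0 k) _; exact: le_trans ler01 (r1 k).
  have -> : (w'^T *m SigmaJ P Y Jstar *m w') 0 0 = (w^T *m SigmaJ P Y J *m w) 0 0 / t ^+ 2.
    rewrite !quadE mulr_suml; apply: eq_bigr => l _.
    rewrite !mulr_suml; apply: eq_bigr => k _.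
    rewrite !mxE.
    have hk := key k l.
    have e : cov P Y (Jstar k) (Jstar l) = cov P Y (J k) (J l) * (s (Jstar k) * s (Jstar l)) / (s (J k) * s (J l)).
      by rewrite -hk mulfK // mulf_neq0.
    rewrite e /r; field.
    by rewrite !sne0 gt_eqF.
  rewrite ler_pdivrMr ?exprn_gt0 //; apply: ler_peMr; first exact: Qge0.
  exact: exprn_ege1.
rewrite /varmin.
have [[w0 Hw0]|empty] := pselect (exists w : 'cV[R]_K, simplex K w); last first.
  have E : @simplex R K = set0.
    by apply/seteqP; split => w // Hw; exfalso; apply: empty; exists w.
  by rewrite E !image_set0.
apply: lb_le_inf.
  by exists ((w0^T *m SigmaJ P Y J *m w0) 0 0), w0.
move=> y [w Hw <-]; have [w' [Hw' le]] := step w Hw.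
apply: le_trans le; apply: ge_inf; last by exists w'.
by exists 0 => z [v _ <-]; exact: Qge0.
Qed.
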